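(* Let $n>k\geq 1$ and $r=n-k$. There exists an $(n,k,\ell)$ MDS array code with $\ell=\mathrm{lcm}(1,2,\ldots,r)\cdot r^n$ that satisfies the $(h,d)$-optimal repair property simultaneously for all integer pairs $(h,d)$ with $1\leq h\leq n-k$, $k\leq d\leq n-h$ and $h\mid(d-k)$.
   Context: An $(n,k,\ell)$ MDS array code over a finite field $F$ is an $F$-linear set of vectors $(\bm c_1,\ldots,\bm c_n)$, $\bm c_i\in F^\ell$ (node $i$ stores $\bm c_i$), of dimension $k\ell$, such that any $k$ coordinates $\bm c_i$ determine the codeword. For $1\leq h\leq n-k$, $k\leq d\leq n-h$, the $(h,d)$-optimal repair property means: for every $h$-subset $\mathcal{H}\subseteq[n]$ of failed nodes and every $d$-subset $\mathcal{R}\subseteq[n]\setminus\mathcal{H}$ of helper nodes, each helper $j\in\mathcal{R}$ can send $\beta=\frac{h\ell}{d-k+h}$ symbols of $F$ computed from $\bm c_j$ such that from these $\frac{dh\ell}{d-k+h}$ symbols in total all $\bm c_i$, $i\in\mathcal{H}$, are determined, for every codeword (equality in the cut-set bound). *)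

(* Defs.v *)
From HB Require Import structures.
From mathcomp Require Import all_boot all_order all_algebra all_field.
Set Implicit Arguments. Unset Strict Implicit. Unset Printing Implicit Defensive.
Import GRing.Theory.
Local Open Scope ring_scope.

(* A codeword is an n x l matrix over F; row i is the content c_i of node i. *)

Definition MDS_array_code (F : fieldType) (n k l : nat)
    (C : {vspace 'M[F]_(n, l)}) : Prop :=
  (\dim C = k * l)%N /\
  forall S : {set 'I_n}, #|S| = k ->
    forall c1 c2 : 'M[F]_(n, l), c1 \in C -> c2 \in C ->
      (forall i, i \in S -> row i c1 = row i c2) -> c1 = c2.

Definition repair_beta (k l h d : nat) : nat := (h * l %/ (d - k + h))%N.

Definition hd_optimal_repair (F : fieldType) (n k l : nat)
    (C : {vspace 'M[F]_(n, l)}) (h d : nat) : Prop :=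
  ((d - k + h) %| h * l)%N /\
  forall H R : {set 'I_n}, #|H| = h -> #|R| = d -> [disjoint H & R] ->
    exists f : 'I_n -> 'rV[F]_l -> 'rV[F]_(repair_beta k l h d),
    exists g : ('I_n -> 'rV[F]_(repair_beta k l h d)) -> 'M[F]_(n, l),
      forall c, c \in C -> forall i, i \in H ->
        row i (g (fun j => if j \in R then f j (row j c) else 0)) = row i c.

Definition lcm_upto (r : nat) : nat := \big[lcmn/1%N]_(1 <= i < r.+1) i.

(* Main.v *)
Require Import Defs.
From HB Require Import structures.
From mathcomp Require Import all_boot all_order all_algebra all_field.
From mathcomp Require Import zify.
Set Implicit Arguments. Unset Strict Implicit. Unset Printing Implicit Defensive.
Import GRing.Theory.
Local Open Scope ring_scope.



Lemma vdm2 (F : fieldType) (I1 I2 : finType) (A1 : {set I1}) (A2 : {set I2})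
  (nu1 : I1 -> F) (nu2 : I2 -> F) (a1 : I1 -> F) (a2 : I2 -> F) (r : nat) :
  (#|A1| + #|A2| <= r)%N ->
  {in A1 &, injective nu1} -> {in A2 &, injective nu2} ->
  (forall p q, p \in A1 -> q \in A2 -> nu1 p != nu2 q) ->
  (forall e, (e < r)%N -> \sum_(p in A1) nu1 p ^+ e * a1 p + \sum_(q in A2) nu2 q ^+ e * a2 q = 0) ->
  forall p, p \in A1 -> a1 p = 0.
Proof.
move=> hcard inj1 inj2 dis heq p0 hp0.
set rs := [seq nu1 p | p in A1 :\ p0] ++ [seq nu2 q | q in A2].
pose P := \prod_(x <- rs) ('X - x%:P).
have szP : (size P <= r)%N.
  rewrite /P size_prod_XsubC size_cat !size_map -!cardE.
  move: hcard; rewrite (cardsD1 p0 A1) hp0 /= add1n; exact.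
have key : \sum_(p in A1) P.[nu1 p] * a1 p + \sum_(q in A2) P.[nu2 q] * a2 q = 0.
  have -> : \sum_(p in A1) P.[nu1 p] * a1 p + \sum_(q in A2) P.[nu2 q] * a2 q =
     \sum_(e < size P) P`_e * (\sum_(p in A1) nu1 p ^+ e * a1 p + \sum_(q in A2) nu2 q ^+ e * a2 q).
    have gen : forall (I : finType) (A : {set I}) (nu a : I -> F),
        \sum_(p in A) P.[nu p] * a p = \sum_(e < size P) P`_e * \sum_(p in A) nu p ^+ e * a p.
      move=> I A nu a; symmetry; under eq_bigr do rewrite mulr_sumr.
      rewrite exchange_big /=; apply: eq_bigr => i _; rewrite horner_coef mulr_suml; symmetry.
      by apply: eq_bigr => e _; rewrite mulrA.
    by rewrite !gen -big_split /=; apply: eq_bigr => e _; rewrite mulrDr.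
  rewrite big1 ?add0r; last first.
    move=> e he; rewrite heq ?mulr0 //; exact: leq_trans (ltn_ord e) szP.
  done.
have z2 : \sum_(q in A2) P.[nu2 q] * a2 q = 0.
  apply: big1 => q hq; apply/eqP; rewrite mulf_eq0; apply/orP; left.
  by rewrite -/(root P _) root_prod_XsubC mem_cat; apply/orP; right; apply: map_f; rewrite mem_enum.
rewrite z2 addr0 (bigD1 p0) //= big1 ?addr0 in key; last first.
  move=> p /andP [hp hne]; apply/eqP; rewrite mulf_eq0; apply/orP; left.
  by rewrite -/(root P _) root_prod_XsubC mem_cat; apply/orP; left; apply: map_f; rewrite mem_enum in_setD1 hne.
move/eqP: key; rewrite mulf_eq0 => /orP [/eqP Hr|/eqP //]; exfalso.
have : root P (nu1 p0) by rewrite /root Hr.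
rewrite root_prod_XsubC mem_cat => /orP [] /mapP [y]; rewrite mem_enum.
  rewrite in_setD1 => /andP [hne hy] /esym/inj1 => H.
  by move: hne; rewrite H ?eqxx.
move=> hy he; by move: (dis _ _ hp0 hy); rewrite he eqxx.
Qed.



Definition parity (F : fieldType) (n l r : nat) (lam : 'I_n -> 'I_l -> F)
  (c : 'M[F]_(n, l)) : 'M[F]_(r, l) :=
  \matrix_(e < r, x < l) \sum_(i < n) lam i x ^+ e * c i x.

Fact parity_is_semilinear F n l r lam : semilinear (@parity F n l r lam).
Proof.
split=> [a A|A B]; apply/matrixP => e x; rewrite !mxE.
  by rewrite mulr_sumr; apply: eq_bigr => i _; rewrite !mxE mulrCA.
by rewrite -big_split; apply: eq_bigr => i _; rewrite !mxE mulrDr.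
Qed.
HB.instance Definition _ (F : fieldType) n l r (lam : 'I_n -> 'I_l -> F) :=
  GRing.isSemilinear.Build F 'M[F]_(n, l) 'M[F]_(r, l) _ (@parity F n l r lam)
    (@parity_is_semilinear F n l r lam).

Definition code (F : fieldType) (n l r : nat) (lam : 'I_n -> 'I_l -> F) :
  {vspace 'M[F]_(n, l)} := lker (linfun (@parity F n l r lam)).

Lemma mem_code F n l r lam c :
  (c \in @code F n l r lam) <->
  (forall (e : nat) x, (e < r)%N -> \sum_(i < n) lam i x ^+ e * c i x = 0).
Proof.
rewrite memv_ker lfunE /=; split.
  move/eqP/matrixP => H e x he; move: (H (Ordinal he) x); by rewrite !mxE.
move=> H; apply/eqP/matrixP => e x; rewrite !mxE; exact: H.
Qed.

Lemma code_mds F n l r lam (S : {set 'I_n}) c :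
  (forall x, injective (lam ^~ x)) -> (#|~: S| <= r)%N ->
  c \in @code F n l r lam -> (forall i x, i \in S -> c i x = 0) -> c = 0.
Proof.
move=> inj hS /mem_code hc h0; apply/matrixP => i x; rewrite mxE.
case: (boolP (i \in S)) => hi; first exact: h0.
have hA2 : #|(set0 : {set 'I_n})| = 0%N by rewrite cards0.
apply: (@vdm2 F _ _ (~: S) set0 (lam ^~ x) (lam ^~ x) (c ^~ x) (c ^~ x) r) => //.
- by rewrite hA2 addn0.
- by move=> a b _ _; apply: inj.
- by move=> a b _ _; apply: inj.
- by move=> p q _; rewrite in_set0.
- move=> e he; rewrite big_set0 addr0; rewrite -[RHS](hc e x he) [RHS](bigID (mem S)) /=.
  rewrite [X in _ = X + _]big1 ?add0r; last by move=> j hj; rewrite h0 ?mulr0.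
  by apply: eq_bigl => j; rewrite in_setC.
- by rewrite in_setC.
Qed.

Lemma code_dim F n k r l lam :
  (forall x, injective (lam ^~ x)) -> n = (k + r)%N ->
  \dim (@code F n l r lam) = (k * l)%N.
Proof.
move=> inj hn; apply/eqP; rewrite eqn_leq; apply/andP; split.
  have hk : (k <= n)%N by rewrite hn leq_addr.
  pose E : 'M[F]_(k, n) := \matrix_(i < k, j < n) (j == widen_ord hk i)%:R.
  have := limg_ker_dim (linfun (mulmx E)) (code r lam).
  have -> : \dim (code r lam :&: lker (linfun (mulmx E))) = 0%N.
    apply/eqP; rewrite dimv_eq0 -subv0; apply/subvP => v.
    rewrite memv_cap memv0 => /andP [hv]; rewrite memv_ker lfunE /= => /eqP hE.
    apply/eqP; apply: (@code_mds F n l r lam [set widen_ord hk i | i : 'I_k]) => //.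
      rewrite cardsCs setCK card_imset ?card_ord; last by move=> a b /(congr1 val) /= /val_inj.
      by rewrite hn addKn.
    move=> i x /imsetP [j _ ->].
    move/matrixP: hE => /(_ j x); rewrite !mxE => <-.
    rewrite (bigD1 (widen_ord hk j)) //= big1 ?addr0; first by rewrite mxE eqxx mul1r.
    by move=> a ha; rewrite mxE (negbTE ha) mul0r.
  rewrite add0n => <-.
  by apply: leq_trans (dimvS (subvf _)) _; rewrite dimvf dim_matrix.
have := limg_ker_dim (linfun (@parity F n l r lam)) fullv.
rewrite capfv -/(code r lam) dimvf dim_matrix => H.
have : (\dim (linfun (@parity F n l r lam) @: fullv) <= r * l)%N.
  by apply: leq_trans (dimvS (subvf _)) _; rewrite dimvf dim_matrix.
have e1 : (n * l = k * l + r * l)%N by rewrite hn mulnDl.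
move=> H2; have H' : (\dim (code r lam) + \dim (limg (linfun (parity r lam))) = n * l)%N := H.
lia.
Qed.



Lemma code_repair F n l r lam (H R : {set 'I_n}) (T : finType) (rid : 'I_l -> T) c :
  (forall x, injective (lam ^~ x)) ->
  [disjoint H & R] ->
  (forall x y j, rid x = rid y -> j \notin H -> lam j x = lam j y) ->
  (forall x y i i', rid x = rid y -> i \in H -> i' \in H -> lam i x = lam i' y -> x = y) ->
  (forall x, (#|H| * #|[set y | rid y == rid x]| + #|~: (H :|: R)| <= r)%N) ->
  c \in @code F n l r lam ->
  (forall j rho, j \in R -> \sum_(y | rid y == rho) c j y = 0) ->
  forall i x, i \in H -> c i x = 0.
Proof.
move=> inj dHR ha hb hcard /mem_code hc hmsg i0 x0 hi0.
set Fb := [set y | rid y == rid x0].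
pose N := ~: (H :|: R).
have hFb : forall y, (y \in Fb) = (rid y == rid x0) by move=> y; rewrite inE.
apply: (@vdm2 F _ _ (setX H Fb) N (fun p => lam p.1 p.2) (fun j => lam j x0)
   (fun p => c p.1 p.2) (fun j => \sum_(y in Fb) c j y) r _ _ _ _ _ (i0, x0)).
- by rewrite cardsX; apply: hcard.
- move=> [a y] [b y']; rewrite !in_setX /= !hFb => /andP [ha' hy] /andP [hb' hy'] he.
  have eyy : y = y' by apply: (hb y y' a b) => //; rewrite (eqP hy) (eqP hy').
  subst y'; congr (_, _); exact: (inj y).
- by move=> a b _ _; apply: inj.
- move=> [a y] j; rewrite in_setX /= hFb => /andP [ha' hy] hj.
  have hjH : j \notin H by move: hj; rewrite in_setC in_setU negb_or => /andP [].
  rewrite (ha x0 y j) //; last by rewrite (eqP hy).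
  apply/negP => /eqP /inj ea; subst j; by rewrite ha' in hjH.
- move=> e he.
  have h0 : \sum_(y in Fb) \sum_(i < n) lam i y ^+ e * c i y = 0.
    by apply: big1 => y _; apply: hc.
  rewrite exchange_big /= (bigID (mem H)) /= in h0.
  rewrite -[RHS]h0; congr (_ + _).
    rewrite (pair_big_dep (mem H) (fun _ => mem Fb) (fun i y => lam i y ^+ e * c i y)) /=.
    by apply: eq_bigl => -[a y]; rewrite in_setX.
  have -> : \sum_(i < n | i \notin H) \sum_(y in Fb) lam i y ^+ e * c i y =
            \sum_(i < n | i \notin H) lam i x0 ^+ e * \sum_(y in Fb) c i y.
    apply: eq_bigr => i hi; rewrite mulr_sumr; apply: eq_bigr => y hy.
    by rewrite (ha x0 y i) // (eqP (_ : rid y == rid x0)) // -hFb.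
  rewrite [RHS](bigID (mem R)) /= [X in _ = X + _]big1 ?add0r; last first.
    move=> i /andP [_ hiR]; have -> : \sum_(y in Fb) c i y = 0.
      rewrite -[RHS](hmsg i (rid x0) hiR); apply: eq_bigl => y; by rewrite hFb.
    by rewrite mulr0.
  by apply: eq_bigl => i; rewrite /N in_setC in_setU negb_or.
- by rewrite in_setX hi0 hFb eqxx.
Qed.



Lemma repair_wrap (F : finFieldType) n l (C : {vspace 'M[F]_(n,l)}) beta (H R : {set 'I_n})
    (rid : 'I_l -> 'I_beta) :
  (forall c, c \in C -> (forall j rho, j \in R -> \sum_(y | rid y == rho) c j y = 0) ->
     forall i x, i \in H -> c i x = 0) ->
  exists f : 'I_n -> 'rV[F]_l -> 'rV[F]_beta,
  exists g : ('I_n -> 'rV[F]_beta) -> 'M[F]_(n, l),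
    forall c, c \in C -> forall i, i \in H ->
      row i (g (fun j => if j \in R then f j (row j c) else 0)) = row i c.
Proof.
move=> hrep.
pose f := fun (j : 'I_n) (v : 'rV[F]_l) => \row_(rho < beta) \sum_(y | rid y == rho) v 0 y.
pose msg := fun (c : 'M[F]_(n, l)) (j : 'I_n) => if j \in R then f j (row j c) else 0.
exists f; exists (fun m => odflt 0 [pick c | (c \in C) && [forall j, msg c j == m j]]).
move=> c hc i hi.
case: pickP => [c' /andP [hc' /forallP hm] | hn] /=; last first.
  by move: (hn c); rewrite hc /=; move/negbT/negP; case; apply/forallP => j; rewrite eqxx.
have hd : c - c' \in C by rewrite memvB.
have hz : forall j rho, j \in R -> \sum_(y | rid y == rho) (c - c') j y = 0.
  move=> j rho hj; move: (hm j); rewrite /msg hj => /eqP /matrixP /(_ 0 rho); rewrite !mxE => e.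
  rewrite (eq_bigr (fun y => c j y - c' j y)); last by move=> y _; rewrite !mxE.
  rewrite sumrB; apply/eqP; rewrite subr_eq0; apply/eqP.
  rewrite (eq_bigr (fun y => row j c 0 y)); last by move=> y _; rewrite mxE.
  rewrite -e; apply: eq_bigr => y _; by rewrite mxE.
apply/matrixP => a x; rewrite !mxE.
have := hrep _ hd hz i x hi; rewrite !mxE => /eqP; by rewrite subr_eq0 => /eqP <-.
Qed.



Lemma zlt (L t : nat) (htL : (t %| L)%N) (z : 'I_L) : (z %/ t < L %/ t)%N.
Proof. by rewrite ltn_divRL // (leq_ltn_trans (leq_trunc_div z t)). Qed.

Definition rid n r' L t l (ee : 'I_l -> ('I_L * {ffun 'I_n -> 'I_r'.+1})%type)
  (H : {set 'I_n}) (htL : (t %| L)%N) (x : 'I_l) :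
  ('I_(L %/ t) * {ffun 'I_n -> 'I_r'.+1})%type :=
  (Ordinal (zlt htL (ee x).1),
   [ffun j => if j \in H then (ee x).2 j - inZp ((ee x).1 %% t) else (ee x).2 j]).

Lemma rid_key n r' L t l ee H htL (x y : 'I_l) :
  injective ee -> (t <= r'.+1)%N ->
  @rid n r' L t l ee H htL x = rid ee H htL y ->
  ((ee x).1 %% t = (ee y).1 %% t)%N -> x = y.
Proof.
move=> inj htr [hq hf] hm; apply: inj.
have hz : (ee x).1 = (ee y).1.
  apply: val_inj => /=; rewrite (divn_eq (ee x).1 t) (divn_eq (ee y).1 t) hm; congr (_ * _ + _)%N; exact: hq.
case E1 : (ee x) => [zx fx]; case E2 : (ee y) => [zy fy].
rewrite E1 E2 /= in hz hf hm; subst zy; congr (_, _).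
apply/ffunP => j; move/ffunP: hf => /(_ j); rewrite !ffunE.
by case: (j \in H) => // /subIr.
Qed.

Lemma rid_notH n r' L t l ee H htL (x y : 'I_l) j :
  @rid n r' L t l ee H htL x = rid ee H htL y -> j \notin H -> (ee x).2 j = (ee y).2 j.
Proof.
by move=> [_ /ffunP /(_ j)]; rewrite !ffunE => + hj; rewrite (negbTE hj).
Qed.

Lemma rid_H n r' L t l ee H htL (x y : 'I_l) i :
  injective ee -> (t <= r'.+1)%N ->
  @rid n r' L t l ee H htL x = rid ee H htL y -> i \in H -> (ee x).2 i = (ee y).2 i -> x = y.
Proof.
move=> inj htr e hi hd; apply: (rid_key inj htr e).
case: e => _ /ffunP /(_ i); rewrite !ffunE hi hd => /addrI /oppr_inj /(congr1 val) /=.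
have tpos : (0 < t)%N.
  have zz := (ee x).1; have hh := htL.
  rewrite lt0n; apply/negP => /eqP t0; rewrite t0 dvd0n in hh.
  move: zz; rewrite (eqP hh); by case.
by rewrite !(@modn_small _ r'.+1) // (leq_trans _ htr) // ltn_pmod.
Qed.

Lemma rid_fiber n r' L t l ee H htL (x : 'I_l) :
  injective ee -> (t <= r'.+1)%N ->
  (#|[set y | @rid n r' L t l ee H htL y == rid ee H htL x]| <= t)%N.
Proof.
move=> inj htr.
have tpos : (0 < t)%N.
  have zz := (ee x).1; have hh := htL.
  rewrite lt0n; apply/negP => /eqP t0; rewrite t0 dvd0n in hh.
  move: zz; rewrite (eqP hh); by case.
pose f := fun y => Ordinal (ltn_pmod (ee y).1 tpos).
apply: leq_trans (@leq_card_in _ _ f _ _) _; last by rewrite card_ord.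
move=> y1 y2; rewrite !inE => /eqP h1 /eqP h2 /(congr1 val) /= hm.
apply: (rid_key inj htr) => //; exact: (etrans h1 (esym h2)).
Qed.



Lemma lamv_inj (p : nat) (pr : prime p) n r (hp : (n * r < p)%N) (i j : 'I_n) (a b : 'I_r) :
  ((i * r + a)%:R : 'F_p) = (j * r + b)%:R -> i = j /\ a = b.
Proof.
move/(congr1 (fun z : 'F_p => nat_of_ord z)); rewrite /= !val_Fp_nat //.
have hi := ltn_ord i; have hj := ltn_ord j; have ha := ltn_ord a; have hb := ltn_ord b.
rewrite !modn_small; try nia.
move=> e; have eij : (i : nat) = j by nia.
split; apply: val_inj => //=; move: e; rewrite eij; lia.
Qed.

Lemma corollary1_aux (n k : nat) (hk : (1 <= k)%N) (hkn : (k < n)%N) :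
  exists F : finFieldType,
  exists C : {vspace 'M[F]_(n, lcm_upto (n - k) * (n - k) ^ n)},
    MDS_array_code k C /\
    forall h d : nat, (1 <= h <= n - k)%N -> (k <= d <= n - h)%N ->
      (h %| d - k)%N -> hd_optimal_repair k C h d.
Proof.
have [r' hr] : exists r', (n - k)%N = r'.+1 by exists (n - k).-1; lia.
rewrite hr.
have [p hp pr] := prime_above (n * r'.+1).
set L := lcm_upto r'.+1.
set l := (L * r'.+1 ^ n)%N.
pose X := ('I_L * {ffun 'I_n -> 'I_r'.+1})%type.
have cardX : #|{: X}| = l by rewrite card_prod card_ffun !card_ord.
pose ee (x : 'I_l) : X := enum_val (cast_ord (esym cardX) x).
have eeinj : injective ee by move=> x y /enum_val_inj /cast_ord_inj.
pose lamv (i : 'I_n) (a : 'I_r'.+1) : 'F_p := (i * r'.+1 + a)%:R.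
pose lam (i : 'I_n) (x : 'I_l) := lamv i ((ee x).2 i).
have laminj : forall x, injective (lam ^~ x).
  by move=> x i j /(lamv_inj pr hp) [].
exists ('F_p : finFieldType).
exists (code r'.+1 lam).
split.
  split; first by apply: code_dim; [exact: laminj | clear -hr hkn; lia].
  move=> S hS c1 c2 h1 h2 hrow; apply/eqP; rewrite -subr_eq0; apply/eqP.
  apply: (code_mds (r := r'.+1) (S := S)).
  - exact: laminj.
  - have := cardsC S; rewrite card_ord hS => hh; clear -hh hr hkn; lia.
  - by rewrite memvB.
  - move=> i x hi; move/matrixP: (hrow i hi) => /(_ 0 x); rewrite !mxE => ->.
    by rewrite subrr.
move=> h d /andP [h1 hhr] /andP [hkd hdn] hdiv.
set t := ((d - k) %/ h).+1.
have ets : (d - k + h = t * h)%N by rewrite /t mulSn divnK // addnC.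
have tth : (t <= t * h)%N by rewrite leq_pmulr.
have htr : (t <= r'.+1)%N by clear -ets tth hhr hdn hkd hr hk; lia.
have htL : (t %| L)%N.
  rewrite /L /lcm_upto big_geq_mkord.
  have ht2 : (t < r'.+2)%N by clear -htr; lia.
  by apply: (biglcmn_sup (Ordinal ht2)).
split.
  rewrite ets /l (mulnC h); apply: dvdn_mul => //; exact: dvdn_mulr.
move=> H R hH hR hdis.
have cardR : #|{: ('I_(L %/ t) * {ffun 'I_n -> 'I_r'.+1})%type}| = repair_beta k l h d.
  rewrite card_prod card_ffun !card_ord /repair_beta ets /l -[in RHS](divnK htL).
  have -> : (h * (L %/ t * t * r'.+1 ^ n) = (L %/ t * r'.+1 ^ n) * (t * h))%N.
    by rewrite mulnC -!mulnA; congr (_ * _)%N; rewrite mulnCA mulnC -mulnA.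
  by rewrite mulnK // muln_gt0 h1.
pose idx (rho : ('I_(L %/ t) * {ffun 'I_n -> 'I_r'.+1})%type) : 'I_(repair_beta k l h d) :=
  cast_ord cardR (enum_rank rho).
have idxinj : injective idx by move=> a b /cast_ord_inj /enum_rank_inj.
apply: (@repair_wrap _ n l _ _ H R (fun x => idx (rid ee H htL x))).
move=> c hc hmsg i x hi.
apply: (@code_repair _ n l r'.+1 lam H R _ (rid ee H htL) c laminj hdis _ _ _ hc _ i x hi).
- by move=> x1 y1 j e hj; rewrite /lam (rid_notH e hj).
- move=> x1 y1 i1 i2 e hi1 hi2 /(lamv_inj pr hp) [ei ed]; subst i2.
  exact: (rid_H eeinj htr e hi1 ed).
- move=> x1; have := rid_fiber H htL x1 eeinj htr.
  set fb := #|_| => hfb.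
  have hmul : (h * fb <= h * t)%N by rewrite leq_mul.
  have := cardsC (H :|: R); rewrite card_ord cardsU (disjoint_setI0 hdis) cards0 hH hR.
  move: hmul; rewrite (mulnC h) => hmul hc2; clear -hmul hc2 ets hr hkd hdn hhr hk; lia.
- move=> j rho hj; rewrite -[RHS](hmsg j (idx rho) hj).
  by apply: eq_bigl => y; rewrite (inj_eq idxinj).
Qed.


Unset Implicit Arguments.
Close Scope ring_scope.

Theorem corollary1 (n k : nat) (hk : (1 <= k)%N) (hkn : (k < n)%N) :
  exists F : finFieldType,
  exists C : {vspace 'M[F]_(n, lcm_upto (n - k) * (n - k) ^ n)},
    MDS_array_code k C /\
    forall h d : nat, (1 <= h <= n - k)%N -> (k <= d <= n - h)%N ->
      (h %| d - k)%N -> hd_optimal_repair k C h d.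
Proof. exact: corollary1_aux. Qed.
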